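(* There is an absolute constant $d$ such that the following holds. Let $N=A+B>0$ with integers $A\ge B\ge0$. Let $X\in\{0,1\}^N$ be chosen uniformly at random among all strings with exactly $A$ ones and $B$ zeros. Let $M$ be the (1-indexed) position of the $(\lfloor N/2\rfloor+1)$-st one in $X$ if $A>B$, and $M=N$ if $A=B$. Then for every $r\ge1$, $$\Pr_X\left[\,\left|M-\frac{N^2}{2A}\right|>d\sqrt{rN}\,\right]\le 2^{-r}.$$ *)

(* Defs.v *)
From mathcomp Require Import all_boot.
From Stdlib Require Import Reals.

Set Implicit Arguments.
Unset Strict Implicit.
Unset Printing Implicit Defensive.

Definition ones_pos (N : nat) (X : N.-tuple bool) : seq nat :=
  [seq i <- iota 1 N | nth false X i.-1].

(* M: position (1-indexed) of the (floor(N/2)+1)-st one if A > B, and N if A = B.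
   Here A = number of ones, B = N - A. *)
Definition M_of (N A : nat) (X : N.-tuple bool) : nat :=
  if (N - A < A)%N then nth 0%N (ones_pos X) N./2 else N.

Definition strings_with (N A : nat) : {set N.-tuple bool} :=
  [set X : N.-tuple bool | count (fun b : bool => b) X == A].

Definition unif_prob (N A : nat) (E : pred (N.-tuple bool)) : R :=
  (INR #|[set X in strings_with N A | E X]| / INR #|strings_with N A|)%R.

(* Main.v *)
Require Import Defs.
From mathcomp Require Import all_boot zify.
From Stdlib Require Import Reals Lra.
From Stdlib Require ZArith.
Set Implicit Arguments. Unset Strict Implicit. Unset Printing Implicit Defensive.

Lemma card_count n (P : pred 'I_n) : #|[set i | P i]| = count P (enum 'I_n).
Proof. rewrite -sum1_card -sum1_count big_enum_cond /=. apply: eq_bigl => i. by rewrite inE. Qed.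

Lemma count_tuple N (X : N.-tuple bool) (p : pred bool) :
  count p X = #|[set i : 'I_N | p (tnth X i)]|.
Proof. by rewrite card_count -{1}(map_tnth_enum X) count_map. Qed.

Definition Bset N (b : bool) (X : N.-tuple bool) : {set 'I_N} := [set i | tnth X i == b].
Definition Lset N (m : nat) : {set 'I_N} := [set i : 'I_N | i < m].

Lemma card_Lset N m : m <= N -> #|Lset N m| = m.
Proof.
move=> mN; rewrite /Lset card_count.
rewrite -(count_map val (fun i => i < m)) val_enum_ord -size_filter.
by rewrite (filter_iota_ltn 0 mN) size_iota.
Qed.

Lemma count_Bset N (X : N.-tuple bool) : count (fun b : bool => b) X = #|Bset true X|.
Proof. by rewrite count_tuple; apply: eq_card => i; rewrite !inE eqb_id. Qed.

Lemma Bset_false N (X : N.-tuple bool) : #|Bset false X| = N - #|Bset true X|.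
Proof.
have H := cardsC (Bset true X); rewrite card_ord in H.
have -> : #|Bset false X| = #|~: Bset true X|.
  by apply: eq_card => i; rewrite !inE; case: (tnth X i).
move: H; set k := #|Bset true X|; set l := #|~: _|; move=> H; lia.
Qed.

Lemma cnt_split N m (X : N.-tuple bool) :
  #|Bset true X :&: Lset N m| + #|Bset false X :&: Lset N m| = #|Lset N m|.
Proof.
rewrite -(cardsID (Bset true X) (Lset N m)) setIC; congr (_ + _).
by apply: eq_card => i; rewrite !inE; case: (tnth X i) => //=; rewrite andbF.
Qed.

Lemma strings_lb N A : 'C(N, A) <= #|strings_with N A|.
Proof.
rewrite -[N in 'C(N, _)]card_ord -card_draws.
pose f (D : {set 'I_N}) : N.-tuple bool := [tuple (i \in D) | i < N].
have injf : injective f.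
  move=> D1 D2 H; apply/setP => i.
  by rewrite -(tnth_mktuple (fun i => i \in D1) i) -(tnth_mktuple (fun i => i \in D2) i) -/(f D1) H.
rewrite -(card_imset _ injf); apply: subset_leq_card; apply/subsetP => X /imsetP[D].
rewrite inE => /eqP HD ->; rewrite inE count_Bset -HD; apply/eqP.
by apply: eq_card => i; rewrite !inE tnth_mktuple eqb_id.
Qed.
Lemma sorted_nth_le (s : seq nat) K m : sorted ltn s -> K < size s ->
  (nth 0 s K <= m) = (K < count (fun k => k <= m) s).
Proof.
elim: s K => [|x s IH] K //= Hs HK.
have Hall : all (ltn x) s by apply: (order_path_min ltn_trans Hs).
have Hss : sorted ltn s by apply: (path_sorted Hs).
have H0 : m < x -> count (fun k => k <= m) s = 0.
  move=> xm; rewrite (eq_in_count (a2:=pred0)) ?count_pred0 // => y /(allP Hall) xy.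
  by apply/negbTE; rewrite -ltnNge; exact: ltn_trans xm xy.
case: K HK => [|K] HK /=.
  case: (leqP x m) => xm //=; by rewrite H0.
rewrite IH //; case: (leqP x m) => xm /=.
  by rewrite add1n ltnS.
by rewrite H0 // add0n ltn0.
Qed.

Lemma ones_sorted N (X : N.-tuple bool) : sorted ltn (ones_pos X).
Proof. by rewrite /ones_pos; apply: (sorted_filter ltn_trans); exact: iota_ltn_sorted. Qed.

Lemma iota1 N : iota 1 N = map succn (iota 0 N).
Proof. by rewrite (iotaDl 1 0). Qed.

Lemma size_ones N (X : N.-tuple bool) : size (ones_pos X) = count (fun b : bool => b) X.
Proof.
rewrite /ones_pos size_filter iota1 count_map.
rewrite -{2}(mkseq_nth false X) size_tuple /mkseq count_map.
by apply: eq_count => i.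
Qed.

Lemma ones_le N (X : N.-tuple bool) k : k \in ones_pos X -> k <= N.
Proof. by rewrite /ones_pos mem_filter mem_iota => /andP[_ /andP[_]]; rewrite add1n ltnS. Qed.
Lemma Bset_inj N b : injective (@Bset N b).
Proof.
move=> X Y /setP E; apply: eq_from_tnth => i.
move: (E i); rewrite !inE; move: b {E}=> b.
by case: b; case: (tnth X i); case: (tnth Y i).
Qed.

Lemma count_sup N b c j (T : {set 'I_N}) : #|T| = j ->
  #|[set X : N.-tuple bool | (#|Bset b X| == c) && (T \subset Bset b X)]| <= 'C(N - j, c - j).
Proof.
move=> Tj.
set E := [set X | _].
pose f X := Bset b X :\: T.
have injf : {in E &, injective f}.
  move=> X Y; rewrite !inE => /andP[_ HX] /andP[_ HY] Hf.
  apply: (@Bset_inj N b).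
  by rewrite -(setID (Bset b X) T) -(setID (Bset b Y) T) (setIidPr HX) (setIidPr HY); rewrite /f in Hf; rewrite Hf.
rewrite -(card_in_imset injf).
have -> : N - j = #|~: T| by rewrite -Tj -[N in N - _]card_ord -(cardsC T) addKn.
rewrite -cards_draws; apply: subset_leq_card; apply/subsetP => D /imsetP[X].
rewrite /E inE => /andP[/eqP Hc HT] ->; rewrite inE /f.
apply/andP; split; first by rewrite setDE subsetIr.
by rewrite cardsD (setIidPr HT) Hc Tj.
Qed.

Lemma count_key N b c m a j : j <= a ->
  #|[set X : N.-tuple bool | (#|Bset b X| == c) && (a <= #|Bset b X :&: Lset N m|)]| * 'C(a,j)
  <= 'C(#|Lset N m|, j) * 'C(N-j, c-j).
Proof.
move=> ja.
apply: (@leq_trans (\sum_(X : N.-tuple bool | #|Bset b X| == c) 'C(#|Bset b X :&: Lset N m|, j))).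
  rewrite -sum_nat_const big_mkcond [X in _ <= X]big_mkcond /=.
  apply: leq_sum => X _; rewrite inE.
  case: (#|Bset b X| == c) => //=.
  case: ifP => // H; exact: leq_bin2l.
rewrite (eq_bigr (fun X => \sum_(T : {set 'I_N} | (T \subset Bset b X :&: Lset N m) && (#|T| == j)) 1)); last first.
  by move=> X _; rewrite sum1dep_card cards_draws.
rewrite (exchange_big_dep (fun T : {set 'I_N} => (T \subset Lset N m) && (#|T| == j))) /=; last first.
  move=> X T _ /andP[H1 H2]; rewrite H2 andbT.
  by apply: (subset_trans H1); exact: subsetIr.
rewrite -cards_draws -sum1dep_card big_distrl /= mul1n.
apply: leq_sum => T /andP[_ /eqP HT].
rewrite sum1dep_card; apply: leq_trans (count_sup b c HT).
apply: subset_leq_card; apply/subsetP => X; rewrite !inE => /andP[-> H] /=.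
case/andP: H => H _; apply: (subset_trans H); exact: subsetIl.
Qed.

Lemma count_ones_le N (X : N.-tuple bool) m :
  count (fun k => k <= m) (ones_pos X) = #|Bset true X :&: Lset N m|.
Proof.
rewrite /ones_pos count_filter iota1 count_map.
rewrite (_ : #|Bset true X :&: Lset N m| = #|[set i : 'I_N | nth false X i && (i < m)]|); last first.
  by apply: eq_card => i; rewrite !inE eqb_id (tnth_nth false).
rewrite card_count -(count_map val (fun i => nth false X i && (i < m))) val_enum_ord.
by apply: eq_count => i /=; rewrite andbC.
Qed.

Section RealPart.
Local Open Scope R_scope.

Lemma INR_sub (a b : nat) : (b <= a)%nat -> INR (a - b) = INR a - INR b.
Proof. move/leP=> H; rewrite -minusE; exact: minus_INR. Qed.
Lemma INR_add (a b : nat) : INR (a + b) = INR a + INR b.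
Proof. by rewrite -plusE plus_INR. Qed.
Lemma INR_mul (a b : nat) : INR (a * b) = INR a * INR b.
Proof. by rewrite -multE mult_INR. Qed.
Lemma INR_leq (a b : nat) : (a <= b)%nat -> INR a <= INR b.
Proof. move/leP; exact: le_INR. Qed.
Lemma INR_ltn (a b : nat) : (a < b)%nat -> INR a < INR b.
Proof. move/ltP; exact: lt_INR. Qed.

Lemma exp_pow x n : exp x ^ n = exp (INR n * x).
Proof.
elim: n => [|n IH]; first by rewrite /= Rmult_0_l exp_0.
rewrite [_ ^ _.+1]/= IH -exp_plus; f_equal; rewrite S_INR; lra.
Qed.

Lemma binom_ratio (N c m a J : nat) (s : R) :
  (0 < N)%nat -> (m <= N)%nat -> (c <= N)%nat -> (a <= m)%nat -> (a <= c)%nat -> (J <= a)%nat ->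
  INR J <= s / 2 -> s = INR a - INR m * INR c / INR N -> 0 < s ->
  INR ('C(m,J) * 'C(N-J, c-J)) <=
  INR ('C(a,J) * 'C(N,c)) * ((INR m * INR c / INR N) / (INR m * INR c / INR N + s/2)) ^ J.
Proof.
move=> N0 mN cN am ac Ja HJ Hs s0.
set P := INR m * INR c / INR N.
set q := P / (P + s/2).
have Nr : 0 < INR N by apply: (INR_ltn N0).
have P0 : 0 <= P.
  rewrite /P; apply: Rmult_le_pos; [apply: Rmult_le_pos; apply: pos_INR | ].
  by apply: Rlt_le; apply: Rinv_0_lt_compat.
have q0 : 0 <= q.
  by rewrite /q; apply: Rmult_le_pos => //; apply: Rlt_le; apply: Rinv_0_lt_compat; lra.
suff : forall j, (j <= J)%nat -> INR ('C(m,j) * 'C(N-j, c-j)) <= INR ('C(a,j) * 'C(N,c)) * q ^ j.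
  by move=> H; apply: H.
elim=> [|j IH] jJ.
  by rewrite !bin0 !subn0 /= !INR_mul; lra.
have jJ' : (j <= J)%nat by apply: ltnW.
have IHj := IH jJ'.
have ja : (j < a)%nat by apply: leq_trans jJ Ja.
have jm : (j < m)%nat by apply: leq_trans ja am.
have jc : (j < c)%nat by apply: leq_trans ja ac.
have jN : (j < N)%nat by apply: leq_trans jm mN.
have E1 : (j.+1 * 'C(m, j.+1) = (m - j) * 'C(m, j))%nat by apply: mul_bin_left.
have E3 : (j.+1 * 'C(a, j.+1) = (a - j) * 'C(a, j))%nat by apply: mul_bin_left.
have E2 : ((N - j) * 'C(N - j.+1, c - j.+1) = (c - j) * 'C(N - j, c - j))%nat.
  have := mul_bin_diag (N - j) (c - j.+1).
  have -> : ((N - j).-1 = N - j.+1)%nat by lia.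
  by have -> : ((c - j.+1).+1 = c - j)%nat by lia.
move: E1 E2 E3 => /(f_equal INR) E1 /(f_equal INR) E2 /(f_equal INR) E3.
rewrite !INR_mul in E1 E2 E3 IHj *.
rewrite !INR_sub in E1 E2 E3; try by apply: ltnW.
have jr : INR j.+1 = INR j + 1 by rewrite S_INR.
rewrite jr in E1 E3.
have jJr : INR j + 1 <= INR J by rewrite -jr; apply: INR_leq.
have jNr : INR j + 1 <= INR N by rewrite -jr; apply: INR_leq.
have jmr : INR j + 1 <= INR m by rewrite -jr; apply: INR_leq.
have jcr : INR j + 1 <= INR c by rewrite -jr; apply: INR_leq.
have mNr : INR m <= INR N by apply: INR_leq.
have cNr : INR c <= INR N by apply: INR_leq.
have key : (INR m - INR j) * (INR c - INR j) <= q * (INR a - INR j) * (INR N - INR j).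
  have h1 : (INR m - INR j) * (INR c - INR j) * INR N <= INR m * INR c * (INR N - INR j).
    have hj : 0 <= INR j by apply: pos_INR.
    have hA : INR m * (INR c - INR N) <= 0.
      have := pos_INR m; nra.
    have hB : 0 <= INR N * (INR c - INR j) by apply: Rmult_le_pos; lra.
    have e : INR m * INR c * (INR N - INR j) - (INR m - INR j) * (INR c - INR j) * INR N
       = INR j * (INR N * (INR c - INR j) - INR m * (INR c - INR N)) by ring.
    have : 0 <= INR j * (INR N * (INR c - INR j) - INR m * (INR c - INR N)).
      by apply: Rmult_le_pos; lra.
    lra.
  have h2 : P <= q * (INR a - INR j).
    have e : INR a = P + s by rewrite /P; lra.
    have hq : q * (P + s/2) = P by rewrite /q; field; lra.
    rewrite e; nra.
  have h3 : (INR m - INR j) * (INR c - INR j) <= P * (INR N - INR j).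
    rewrite /P; apply: (Rmult_le_reg_r (INR N)) => //.
    have -> : INR m * INR c / INR N * (INR N - INR j) * INR N = INR m * INR c * (INR N - INR j) by field; lra.
    exact: h1.
  have : 0 <= INR N - INR j by lra.
  nra.
set R0 := INR 'C(m, j) * INR 'C(N - j, c - j) in IHj E2.
set Q0 := INR 'C(a, j) * INR 'C(N, c) in IHj.
have Cpos : 0 <= INR 'C(a, j.+1) * INR 'C(N, c) by apply: Rmult_le_pos; apply: pos_INR.
apply: (Rmult_le_reg_r ((INR j + 1) * (INR N - INR j))); first by have := pos_INR j; move=> ?; apply: Rmult_lt_0_compat; lra.
have LHS : INR 'C(m, j.+1) * INR 'C(N - j.+1, c - j.+1) * ((INR j + 1) * (INR N - INR j))
   = R0 * ((INR m - INR j) * (INR c - INR j)).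
  rewrite /R0; transitivity (((INR j + 1) * INR 'C(m, j.+1)) * ((INR N - INR j) * INR 'C(N - j.+1, c - j.+1))); first ring.
  rewrite E1 E2; ring.
have RHS : INR 'C(a, j.+1) * INR 'C(N, c) * q ^ j.+1 * ((INR j + 1) * (INR N - INR j))
   = Q0 * q ^ j * (q * (INR a - INR j) * (INR N - INR j)).
  rewrite /Q0 /=; transitivity (((INR j + 1) * INR 'C(a, j.+1)) * INR 'C(N, c) * q ^ j * q * (INR N - INR j)); first ring.
  rewrite E3; ring.
rewrite LHS RHS.
have R0pos : 0 <= R0 by apply: Rmult_le_pos; apply: pos_INR.
have mjc : 0 <= (INR m - INR j) * (INR c - INR j) by apply: Rmult_le_pos; lra.
apply: (Rle_trans _ (Q0 * q ^ j * ((INR m - INR j) * (INR c - INR j)))).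
  by apply: Rmult_le_compat_r.
apply: Rmult_le_compat_l => //.
apply: Rmult_le_pos; [rewrite /Q0; apply: Rmult_le_pos; apply: pos_INR | by apply: pow_le].
Qed.


Lemma exp_le (x y : R) : x <= y -> exp x <= exp y.
Proof. case=> [H|->]; [left; exact: exp_increasing | right; reflexivity]. Qed.

Lemma nat_floor (x : R) : 0 <= x -> exists n : nat, INR n <= x < INR n + 1.
Proof.
move=> x0; have [H1 H2] := archimed x.
exists (Z.to_nat (up x - 1)).
have hz : (0 <= up x - 1)%Z.
  have : (0 < up x)%Z by apply: lt_IZR; lra.
  lia.
rewrite INR_IZR_INZ Stdlib.ZArith.Znat.Z2Nat.id // minus_IZR; lra.
Qed.

Lemma tail_bound N b c m a (s : R) :
  (0 < N)%nat -> (m <= N)%nat -> (c <= N)%nat ->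
  s = INR a - INR m * INR c / INR N -> 4 <= s ->
  INR #|[set X : N.-tuple bool | (#|Bset b X| == c) && (a <= #|Bset b X :&: Lset N m|)%nat]|
  <= INR 'C(N,c) * exp (- (s * s) / (12 * INR N)).
Proof.
move=> N0 mN cN Hs s4.
set E := [set X | _].
have Nr : 0 < INR N by apply: (INR_ltn N0).
have hexp : 0 <= INR 'C(N, c) * exp (- (s * s) / (12 * INR N)).
  apply: Rmult_le_pos; [apply: pos_INR | apply: Rlt_le; apply: exp_pos].
have [/andP[am ac]|hne] := boolP ((a <= m) && (a <= c))%nat; last first.
  have -> : E = set0.
    apply/setP => X; rewrite /E !inE; apply/negbTE; apply/negP => /andP[/eqP Hc Ha].
    move/negP: hne; apply; apply/andP; split.
      apply: (leq_trans Ha); apply: (leq_trans (subset_leq_card (subsetIr _ _))); by rewrite card_Lset.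
    rewrite -Hc; apply: (leq_trans Ha); apply: subset_leq_card; exact: subsetIl.
  by rewrite cards0 /=.
set P := INR m * INR c / INR N.
have P0 : 0 <= P.
  rewrite /P; apply: Rmult_le_pos; [apply: Rmult_le_pos; apply: pos_INR | ].
  by apply: Rlt_le; apply: Rinv_0_lt_compat.
have mNr : INR m <= INR N by apply: INR_leq.
have cNr : INR c <= INR N by apply: INR_leq.
have amr : INR a <= INR m by apply: INR_leq.
have PN : P <= INR m.
  rewrite /P; apply: (Rmult_le_reg_r (INR N)) => //.
  have -> : INR m * INR c / INR N * INR N = INR m * INR c by field; lra.
  have := pos_INR m; nra.
have HsP : s = INR a - P by rewrite Hs.
have [J [HJ1 HJ2]] := @nat_floor (s / 2) ltac:(lra).
have Ja : (J <= a)%nat by apply/leP; apply: INR_le; lra.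
have key1 := count_key N b c m Ja.
rewrite (card_Lset mN) -/E in key1.
move/INR_leq: key1; rewrite !INR_mul => key1.
have key2 := @binom_ratio N c m a J s N0 mN cN am ac Ja ltac:(lra) Hs ltac:(lra).
rewrite -/P !INR_mul in key2.
set q := P / (P + s / 2) in key2.
have Cpos : 0 < INR 'C(a, J) by apply: lt_0_INR; apply/ltP; rewrite bin_gt0.
have q0 : 0 <= q.
  by rewrite /q; apply: Rmult_le_pos => //; apply: Rlt_le; apply: Rinv_0_lt_compat; lra.
have hq : q ^ J <= exp (- (s * s) / (12 * INR N)).
  have q1 : q <= exp (- (s / (3 * INR N))).
    apply: (Rle_trans _ (1 + - ((s/2) / (P + s/2)))); last first.
      apply: (Rle_trans _ _ _ (exp_ineq1_le _)); apply: exp_le.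
      apply: Ropp_le_contravar.
      apply: (Rmult_le_reg_r (3 * INR N * (P + s/2))); first by apply: Rmult_lt_0_compat; lra.
      have -> : s / (3 * INR N) * (3 * INR N * (P + s / 2)) = s * (P + s/2) by field; lra.
      have -> : s / 2 / (P + s / 2) * (3 * INR N * (P + s / 2)) = s * (3 / 2 * INR N) by field; lra.
      apply: Rmult_le_compat_l; lra.
    right; rewrite /q; field; lra.
  apply: (Rle_trans _ (exp (- (s / (3 * INR N))) ^ J)); first by apply: pow_incr; split.
  rewrite exp_pow; apply: exp_le.
  have -> : - (s * s) / (12 * INR N) = - ((s / 4) * (s / (3 * INR N))) by field; lra.
  have h3 : 0 <= s / (3 * INR N) by apply: Rmult_le_pos; [lra | apply: Rlt_le; apply: Rinv_0_lt_compat; lra].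
  have : s / 4 * (s / (3 * INR N)) <= INR J * (s / (3 * INR N)) by apply: Rmult_le_compat_r => //; lra.
  lra.
apply: (Rmult_le_reg_r (INR 'C(a, J))) => //.
apply: (Rle_trans _ _ _ key1); apply: (Rle_trans _ _ _ key2).
have hC : 0 <= INR 'C(a, J) * INR 'C(N, c) by apply: Rmult_le_pos; apply: pos_INR.
have := Rmult_le_compat_l _ _ _ hC hq; lra.
Qed.

End RealPart.

Lemma half_facts N : ((N./2).*2 <= N /\ N < (N./2).*2 + 2)%nat.
Proof. have := odd_double_half N. case: (odd N) => /= H; lia. Qed.

Lemma M_facts N A (X : N.-tuple bool) : (N - A < A)%nat -> X \in strings_with N A ->
  [/\ M_of A X = nth 0%nat (ones_pos X) N./2, (N./2 < size (ones_pos X))%nat,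
      #|Bset true X| = A & (M_of A X <= N)%nat].
Proof.
move=> NA; rewrite inE => /eqP HX.
have HB : #|Bset true X| = A by rewrite -count_Bset.
have AN : (A <= N)%nat by rewrite -HX -{2}(size_tuple X) count_size.
have HK : (N./2 < size (ones_pos X))%nat.
  rewrite size_ones HX; have [h1 h2] := half_facts N; lia.
have HM : M_of A X = nth 0%nat (ones_pos X) N./2 by rewrite /M_of NA.
split => //; rewrite HM; apply: ones_le; exact: mem_nth.
Qed.

Section Claims.
Local Open Scope R_scope.

Lemma INR_half N : 2 * INR N./2 <= INR N /\ INR N < 2 * INR N./2 + 2.
Proof.
have [h1 h2] := half_facts N.
rewrite -mul2n in h1 h2.
split.
  have := INR_leq h1; rewrite INR_mul /=; lra.
have := INR_ltn h2; rewrite INR_add INR_mul /=; lra.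
Qed.

Lemma exp_goal N r t s : (0 < N)%nat -> 1 <= r -> t = 20 * sqrt (r * INR N) -> t / 4 <= s ->
  exp (- (s * s) / (12 * INR N)) <= exp (- (2 * r)).
Proof.
move=> N0 r1 ht hs.
have rN : 1 <= r * INR N.
  have : 1 <= INR N by have := INR_leq N0.
  nra.
have sq : sqrt (r * INR N) * sqrt (r * INR N) = r * INR N by apply: sqrt_sqrt; lra.
have sq1 : 1 <= sqrt (r * INR N) by rewrite -sqrt_1; apply: sqrt_le_1_alt.
have t2 : t * t = 400 * (r * INR N) by rewrite ht; nra.
have s0 : 0 <= t / 4 by rewrite ht; lra.
have ss : t * t / 16 <= s * s by nra.
apply: exp_le.
have : 1 <= INR N by have := INR_leq N0.
move=> N1; apply: (Rmult_le_reg_r (12 * INR N)); first lra.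
have -> : - (s * s) / (12 * INR N) * (12 * INR N) = - (s * s) by field; lra.
nra.
Qed.

Lemma upper N A r t mu : (N - A < A)%nat -> (A <= N)%nat -> 1 <= r ->
  t = 20 * sqrt (r * INR N) -> mu = INR N ^ 2 / (2 * INR A) ->
  exists U : {set N.-tuple bool},
   (forall X, X \in strings_with N A -> mu + t < INR (M_of A X) -> X \in U) /\
   INR #|U| <= INR 'C(N, A) * exp (- (2 * r)).
Proof.
move=> NA AN r1 ht hmu.
have A0 : (0 < A)%nat by lia.
have N0 : (0 < N)%nat by lia.
have Ar : 1 <= INR A by have := INR_leq A0.
have Nr : 1 <= INR N by have := INR_leq N0.
have ANr : INR A <= INR N by apply: INR_leq.
have NAr : INR (N - A) = INR N - INR A by apply: INR_sub.
have N2A : INR N - INR A < INR A by rewrite -NAr; apply: INR_ltn.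
have rN : 1 <= r * INR N by nra.
have sq1 : 1 <= sqrt (r * INR N) by rewrite -sqrt_1; apply: sqrt_le_1_alt.
have t20 : 20 <= t by rewrite ht; lra.
have muA : mu * (INR A / INR N) = INR N / 2 by rewrite hmu /=; field; lra.
have muN : mu <= INR N.
  rewrite hmu /=; apply: (Rmult_le_reg_r (2 * INR A)); first lra.
  have -> : INR N * (INR N * 1) / (2 * INR A) * (2 * INR A) = INR N * INR N by field; lra.
  nra.
have muN2 : INR N / 2 <= mu.
  rewrite hmu /=; apply: (Rmult_le_reg_r (2 * INR A)); first lra.
  have -> : INR N * (INR N * 1) / (2 * INR A) * (2 * INR A) = INR N * INR N by field; lra.
  nra.
have Cpos : 0 <= INR 'C(N, A) * exp (- (2 * r)).
  apply: Rmult_le_pos; [apply: pos_INR | apply: Rlt_le; apply: exp_pos].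
case: (Rle_lt_dec (INR N) (mu + t)) => hcase.
  exists set0; split; last by rewrite cards0 /=.
  move=> X HX Hlt; have [_ _ _ HMN] := M_facts NA HX.
  have := INR_leq HMN; lra.
have [m1 [hm1 hm1']] := @nat_floor (mu + t) ltac:(lra).
have m1N : (m1 < N)%nat by apply/ltP; apply: INR_lt; lra.
have [hK1 hK2] := INR_half N.
have Km1 : (N./2 <= m1)%nat by apply/leP; apply: INR_le; lra.
exists [set X : N.-tuple bool | ((#|Bset false X| == N - A) && (m1 - N./2 <= #|Bset false X :&: Lset N m1|))%nat].
split.
  move=> X HX Hlt; have [HM HK HB _] := M_facts NA HX.
  rewrite inE Bset_false HB eqxx /=.
  have hlt : (m1 < M_of A X)%nat by apply/ltP; apply: INR_lt; lra.
  move: hlt; rewrite HM ltnNge (sorted_nth_le m1 (ones_sorted X) HK) count_ones_le -leqNgt => hc.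
  have := cnt_split m1 X; rewrite (card_Lset (ltnW m1N)).
  move: hc; set u := #|Bset true X :&: _|; set v := #|Bset false X :&: _|; lia.
have m1Nl : (m1 <= N)%nat by apply: ltnW.
set s := INR (m1 - N./2) - INR m1 * INR (N - A) / INR N.
have hs : t / 4 <= s.
  rewrite /s INR_sub // NAr.
  set y := INR A / INR N.
  have y12 : 1 / 2 <= y.
    rewrite /y; apply: (Rmult_le_reg_r (INR N)); first lra.
    have -> : INR A / INR N * INR N = INR A by field; lra.
    lra.
  have e : INR m1 * (INR N - INR A) / INR N = INR m1 - INR m1 * y by rewrite /y; field; lra.
  rewrite e.
  have h1 : (mu + t - 1) * y <= INR m1 * y by apply: Rmult_le_compat_r; lra.
  have h2 : (t - 1) * (1/2) <= (t - 1) * y by apply: Rmult_le_compat_l; lra.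
  have h3 : (mu + t - 1) * y = mu * y + (t - 1) * y by ring.
  have muy : mu * y = INR N / 2 by rewrite /y.
  lra.
have := @tail_bound N false (N - A) m1 (m1 - N./2) s N0 m1Nl (leq_subr _ _) erefl ltac:(lra).
rewrite bin_sub // => H; apply: (Rle_trans _ _ _ H).
apply: Rmult_le_compat_l; first by apply: pos_INR.
exact: (exp_goal N0 r1 ht hs).
Qed.

Lemma lower N A r t mu : (N - A < A)%nat -> (A <= N)%nat -> 1 <= r ->
  t = 20 * sqrt (r * INR N) -> mu = INR N ^ 2 / (2 * INR A) ->
  exists U : {set N.-tuple bool},
   (forall X, X \in strings_with N A -> INR (M_of A X) < mu - t -> X \in U) /\
   INR #|U| <= INR 'C(N, A) * exp (- (2 * r)).
Proof.
move=> NA AN r1 ht hmu.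
have A0 : (0 < A)%nat by lia.
have N0 : (0 < N)%nat by lia.
have Ar : 1 <= INR A by have := INR_leq A0.
have Nr : 1 <= INR N by have := INR_leq N0.
have ANr : INR A <= INR N by apply: INR_leq.
have rN : 1 <= r * INR N by nra.
have sq1 : 1 <= sqrt (r * INR N) by rewrite -sqrt_1; apply: sqrt_le_1_alt.
have t20 : 20 <= t by rewrite ht; lra.
have muN : mu <= INR N.
  have NAr : INR (N - A) = INR N - INR A by apply: INR_sub.
  have N2A : INR N - INR A < INR A by rewrite -NAr; apply: INR_ltn.
  rewrite hmu /=; apply: (Rmult_le_reg_r (2 * INR A)); first lra.
  have -> : INR N * (INR N * 1) / (2 * INR A) * (2 * INR A) = INR N * INR N by field; lra.
  nra.
have Cpos : 0 <= INR 'C(N, A) * exp (- (2 * r)).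
  apply: Rmult_le_pos; [apply: pos_INR | apply: Rlt_le; apply: exp_pos].
case: (Rlt_le_dec (mu - t) 0) => hcase.
  exists set0; split; last by rewrite cards0 /=.
  move=> X HX Hlt; have := pos_INR (M_of A X); lra.
have [m2 [hm2 hm2']] := @nat_floor (mu - t) hcase.
have m2N : (m2 <= N)%nat by apply/leP; apply: INR_le; lra.
have [hK1 hK2] := INR_half N.
exists [set X : N.-tuple bool | ((#|Bset true X| == A) && (N./2.+1 <= #|Bset true X :&: Lset N m2|))%nat].
split.
  move=> X HX Hlt; have [HM HK HB _] := M_facts NA HX.
  rewrite inE HB eqxx /=.
  have hle : (M_of A X <= m2)%nat.
    have : (M_of A X < m2.+1)%nat by apply/ltP; apply: INR_lt; rewrite S_INR; lra.
    by rewrite ltnS.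
  by move: hle; rewrite HM (sorted_nth_le m2 (ones_sorted X) HK) count_ones_le.
set s := INR (N./2.+1) - INR m2 * INR A / INR N.
have hs : t / 4 <= s.
  rewrite /s S_INR.
  set y := INR A / INR N.
  have y12 : 1 / 2 <= y.
    rewrite /y; apply: (Rmult_le_reg_r (INR N)); first lra.
    have -> : INR A / INR N * INR N = INR A by field; lra.
    have NAr : INR (N - A) = INR N - INR A by apply: INR_sub.
    have N2A : INR N - INR A < INR A by rewrite -NAr; apply: INR_ltn.
    lra.
  have e : INR m2 * INR A / INR N = INR m2 * y by rewrite /y; field; lra.
  rewrite e.
  have h1 : INR m2 * y <= (mu - t) * y by apply: Rmult_le_compat_r; lra.
  have h2 : t * (1/2) <= t * y by apply: Rmult_le_compat_l; lra.
  have muy : mu * y = INR N / 2 by rewrite /y hmu /=; field; lra.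
  have h3 : (mu - t) * y = mu * y - t * y by ring.
  lra.
have := @tail_bound N true A m2 (N./2.+1) s N0 m2N AN erefl ltac:(lra).
move=> H; apply: (Rle_trans _ _ _ H).
apply: Rmult_le_compat_l; first by apply: pos_INR.
exact: (exp_goal N0 r1 ht hs).
Qed.

End Claims.

Lemma final_ineq (r : R) : (1 <= r)%R -> (2 * exp (- (2 * r)) <= Rpower 2 (- r))%R.
Proof.
move=> r1; rewrite /Rpower.
have l2 : (ln 2 <= 1)%R.
  case: (Rle_lt_dec (ln 2) 1) => // h.
  have := exp_increasing _ _ h; rewrite exp_ln; last lra.
  have := exp_ineq1_le 1; lra.
rewrite -{1}(exp_ln 2); last lra.
rewrite -exp_plus; apply: exp_le.
have : (ln 2 * (1 + r) <= 1 * (1 + r))%R by apply: Rmult_le_compat_r; lra.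
lra.
Qed.

Theorem mainTheorem9 :
  exists d : R,
  forall (A B : nat), (B <= A)%N -> (0 < A + B)%N ->
  forall r : R, (1 <= r)%R ->
  (@unif_prob (A + B) A
     (fun X => if Rlt_dec (d * sqrt (r * INR (A + B)))
                   (Rabs (INR (@M_of (A + B) A X) - (INR (A + B))^2 / (2 * INR A)))
               then true else false)
   <= Rpower 2 (- r))%R.
Proof.
exists 20%R => A B BA N0 r r1.
rewrite /unif_prob.
have AN : (A <= A + B)%N by apply: leq_addr.
have hBN : (A + B - A = B)%N by rewrite addKn.
move: (A + B) AN hBN N0 => N AN hBN N0.
have Sge := strings_lb N A.
have Cpos : (0 < 'C(N, A))%N by rewrite bin_gt0.
have Cr : (0 < INR 'C(N, A))%R by apply: lt_0_INR; apply/ltP.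
have Sr : (INR 'C(N, A) <= INR #|strings_with N A|)%R by apply: INR_leq.
have Rp : (0 < Rpower 2 (- r))%R by apply: exp_pos.
set t := (20 * sqrt (r * INR N))%R.
set mu := (INR N ^ 2 / (2 * INR A))%R.
set Ev := [set X in strings_with N A | _].
have t0 : (0 <= t)%R by rewrite /t; have := sqrt_pos (r * INR N); lra.
case: (ltngtP B A) BA => // [BA|BA] _; last first.
  have -> : Ev = set0.
    apply/setP => X; rewrite [in RHS]inE; apply/negbTE/negP; rewrite !inE => /andP[_].
    case: Rlt_dec => // H _.
    have HM : M_of A X = N by rewrite /M_of hBN BA ltnn.
    have hN : INR N = (2 * INR A)%R.
      have : N = (A + A)%N by lia.
      by move=> ->; rewrite INR_add; ring.
    have A0 : (0 < INR A)%R by apply: lt_0_INR; apply/ltP; rewrite -BA; lia.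
    move: H; rewrite HM -/mu.
    have -> : mu = INR N by rewrite /mu hN /=; field; lra.
    rewrite Rminus_diag Rabs_R0; lra.
  rewrite cards0 /= /Rdiv Rmult_0_l; lra.
have NA : (N - A < A)%N by rewrite hBN.
have [U [HU1 HU2]] := @upper N A r t mu NA AN r1 erefl erefl.
have [L [HL1 HL2]] := @lower N A r t mu NA AN r1 erefl erefl.
have sub : Ev \subset U :|: L.
  apply/subsetP => X; rewrite [X \in Ev]inE => /andP[HX]; case: Rlt_dec => // H _; rewrite inE.
  rewrite -/mu in H.
  case: (Rcase_abs (INR (M_of A X) - mu)) => hc.
    rewrite Rabs_left // in H.
    by rewrite (HL1 X HX ltac:(lra)) orbT.
  rewrite Rabs_right // in H.
  by rewrite (HU1 X HX ltac:(lra)).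
have cardE : (#|Ev| <= #|U| + #|L|)%N.
  apply: (leq_trans (subset_leq_card sub)); rewrite cardsU; apply: leq_subr.
have cardR := INR_leq cardE; rewrite INR_add in cardR.
apply: (Rle_trans _ (2 * exp (- (2 * r)))); last exact: final_ineq.
apply: (Rle_trans _ (INR #|Ev| / INR 'C(N, A))).
  apply: Rmult_le_compat_l; first by apply: pos_INR.
  apply: Rinv_le_contravar => //.
apply: (Rmult_le_reg_r (INR 'C(N, A))) => //.
have -> : (INR #|Ev| / INR 'C(N, A) * INR 'C(N, A) = INR #|Ev|)%R by field; lra.
lra.
Qed.
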